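(* Let $D$ be a friendship digraph. Then $D$ is a fancy wheel digraph or a regular digraph. Moreover, if $D$ is a regular digraph, then $D$ has $k^2-k+1$ vertices for some integer $k\geq 2$, where $k$ is the outdegree of each vertex of $D$.
   Context: All digraphs are finite and have neither loops nor parallel arcs (a pair of opposite arcs $(u,v)$ and $(v,u)$ is allowed). For a vertex $v$, $N^+(v)$ and $N^-(v)$ denote the sets of out-neighbors and in-neighbors of $v$. A friendship digraph is a nontrivial digraph (at least two vertices) in which any two distinct vertices have exactly one common out-neighbor. A fancy wheel digraph is a digraph $D$ such that (W1) $D$ has exactly one vertex $v$ with $N^+(v)=N^-(v)=V(D)-\{v\}$, and (W2) $D-v$ is a vertex-disjoint union of directed cycles. For a positive integer $k$, a $k$-regular digraph is one in which every vertex has outdegree $k$ and indegree $k$; a digraph is regular if it is $k$-regular for some positive integer $k$. *)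

(* Defs.v *)
From mathcomp Require Import all_boot.
Set Implicit Arguments. Unset Strict Implicit. Unset Printing Implicit Defensive.

(* A digraph on the finite vertex type V is a loopless arc relation
   (pairs of opposite arcs allowed, no parallel arcs by construction). *)
Definition loopless (V : finType) (arc : rel V) : Prop := forall v, ~~ arc v v.

Definition outN (V : finType) (arc : rel V) (v : V) : {set V} := [set w | arc v w].
Definition inN (V : finType) (arc : rel V) (v : V) : {set V} := [set w | arc w v].

Definition friendship (V : finType) (arc : rel V) : Prop :=
  1 < #|V| /\
  forall u v : V, u != v -> #|outN arc u :&: outN arc v| = 1.

(* The digraph induced on the vertex set S is a vertex-disjoint union of
   directed cycles: there is a fixed-point-free permutation f of S
   (its cycles are the directed cycles) such that the arcs inside S are
   exactly the pairs (x, f x). *)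
Definition union_of_dicycles (V : finType) (arc : rel V) (S : {set V}) : Prop :=
  exists f : V -> V,
    [/\ {in S, forall x, f x \in S},
        {in S &, injective f},
        {in S, forall x, f x != x} &
        {in S &, forall x y, arc x y = (y == f x)}].

Definition fancy_wheel (V : finType) (arc : rel V) : Prop :=
  exists v : V,
    [/\ outN arc v = [set~ v], inN arc v = [set~ v],
        (forall w : V, outN arc w = [set~ w] -> inN arc w = [set~ w] -> w = v) &
        union_of_dicycles arc [set~ v]].

Definition k_regular (V : finType) (arc : rel V) (k : nat) : Prop :=
  forall v : V, #|outN arc v| = k /\ #|inN arc v| = k.

Definition regular (V : finType) (arc : rel V) : Prop :=
  exists k, 0 < k /\ k_regular arc k.

(* Main.v *)
Require Import Defs.
From mathcomp Require Import all_boot.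
From mathcomp Require Import zify.

Set Implicit Arguments. Unset Strict Implicit. Unset Printing Implicit Defensive.

Lemma card1_eq (T : finType) (A : {set T}) a b :
  #|A| = 1 -> a \in A -> b \in A -> a = b.
Proof.
move/eqP/cards1P=> [c ->]; rewrite !in_set1 => /eqP-> /eqP->; done.
Qed.

Lemma pick_set1 (T : finType) (c x0 : T) : odflt x0 [pick z in [set c]] = c.
Proof.
case: pickP => [z|H] /=; first by rewrite in_set1 => /eqP.
by have := H c; rewrite in_set1 eqxx.
Qed.

Lemma common_ex (V : finType) (arc : rel V) : friendship arc ->
  forall u x, u != x -> exists c, outN arc u :&: outN arc x = [set c].
Proof. move=> [_ Hf] u x ux. apply/cards1P. by rewrite Hf. Qed.

Lemma in_le_out (V : finType) (arc : rel V) : loopless arc -> friendship arc ->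
  forall u w, ~~ arc u w -> #|inN arc w| <= #|outN arc u|.
Proof.
move=> Hl Hf u w nuw.
pose c x := odflt x [pick z in outN arc u :&: outN arc x].
have cP : forall x, x \in inN arc w -> c x \in outN arc u :&: outN arc x.
  move=> x; rewrite inE => xw.
  have ux : u != x by apply/eqP => E; move: nuw; rewrite E xw.
  have [z Hz] := common_ex Hf ux.
  by rewrite /c Hz pick_set1 in_set1.
have cinj : {in inN arc w &, injective c}.
  move=> x y Hx Hy Exy; apply/eqP; apply/negPn/negP => xy.
  have := cP _ Hx; have := cP _ Hy; rewrite -Exy => /setIP[Hu Hy'] /setIP[_ Hx'].
  have Hwx : w \in outN arc x :&: outN arc y.
    by move: Hx Hy; rewrite !inE => -> ->.
  have Hcx : c x \in outN arc x :&: outN arc y by rewrite inE Hx' Hy'.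
  have := card1_eq (proj2 Hf _ _ xy) Hwx Hcx => E.
  by move: Hu nuw; rewrite -E inE => ->.
rewrite -(card_in_imset cinj); apply: subset_leq_card.
by apply/subsetP => _ /imsetP[x Hx ->]; have /setIP[] := cP _ Hx.
Qed.

Lemma sum_le_eq (I : finType) (P : pred I) (F G : I -> nat) :
  (forall i, P i -> F i <= G i) ->
  \sum_(i | P i) F i = \sum_(i | P i) G i -> forall i, P i -> F i = G i.
Proof.
move=> le eqs i Pi; apply/eqP; rewrite eqn_leq le //= leqNgt; apply/negP => lt.
move: eqs; rewrite (bigD1 i) //= [in RHS](bigD1 i) //= => E.
have : \sum_(j | P j && (j != i)) F j <= \sum_(j | P j && (j != i)) G j.
  by apply: leq_sum => j /andP[Pj _]; apply: le.
lia.
Qed.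

Lemma sum_if_const (T : finType) (S : {set T}) (c : nat) :
  \sum_x (if x \in S then c else 0) = #|S| * c.
Proof. by rewrite -big_mkcond sum_nat_const. Qed.

Lemma sum_in_card (T : finType) (A B : {set T}) :
  \sum_(w in A) (w \in B : nat) = #|A :&: B|.
Proof.
rewrite -sum1_card big_mkcond [RHS]big_mkcond /=; apply: eq_bigr => w _.
by rewrite inE; case: (w \in A); case: (w \in B).
Qed.

Lemma out_eq_in (V : finType) (arc : rel V) : loopless arc -> friendship arc ->
  forall w, #|inN arc w| = #|outN arc w|.
Proof.
move=> Hl Hf w0.
apply: (@sum_le_eq V predT (fun w => #|inN arc w|) (fun w => #|outN arc w|)) => //.
  by move=> w _; apply: in_le_out.
have cE : forall (S : {set V}), #|S| = \sum_x (if x \in S then 1 else 0).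
  by move=> S; rewrite sum_if_const muln1.
rewrite (eq_bigr (fun w => \sum_x (if arc x w then 1 else 0))); last first.
  by move=> w _; rewrite cE; apply: eq_bigr => x _; rewrite inE.
rewrite [RHS](eq_bigr (fun w => \sum_x (if arc w x then 1 else 0))); last first.
  by move=> w _; rewrite cE; apply: eq_bigr => x _; rewrite inE.
by rewrite exchange_big.
Qed.

Lemma nonarc_eq (V : finType) (arc : rel V) : loopless arc -> friendship arc ->
  forall u w, ~~ arc u w -> #|outN arc u| = #|outN arc w|.
Proof.
move=> Hl Hf.
set d := fun x => #|outN arc x|.
have dE := out_eq_in Hl Hf.
have key : \sum_(p : V * V | ~~ arc p.1 p.2) d p.2 = \sum_(p : V * V | ~~ arc p.1 p.2) d p.1.
  rewrite big_mkcond [RHS]big_mkcond /=.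
  rewrite -(pair_big predT predT (fun u w => if ~~ arc u w then d w else 0)) /=.
  rewrite -(pair_big predT predT (fun u w => if ~~ arc u w then d u else 0)) /=.
  rewrite exchange_big /=.
  have cnt : forall x, #|V| - d x = #|~: outN arc x| /\ #|V| - d x = #|~: inN arc x|.
    move=> x; have := cardsC (outN arc x); have := cardsC (inN arc x).
    rewrite /d -dE; lia.
  apply: eq_bigr => x _.
  rewrite (eq_bigr (fun u => if u \in ~: inN arc x then d x else 0)); last first.
    by move=> u _; rewrite !inE.
  rewrite [RHS](eq_bigr (fun w => if w \in ~: outN arc x then d x else 0)); last first.
    by move=> w _; rewrite !inE.
  by rewrite !sum_if_const -!(proj1 (cnt x)) -!(proj2 (cnt x)).
move=> u w nuw.
have /= := sum_le_eq (P := fun p : V * V => ~~ arc p.1 p.2) (F := fun p => d p.2) (G := fun p => d p.1) _ key (i := (u, w)).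
move=> H; symmetry; apply: H => //.
by move=> [x y] /= nxy; rewrite /d -dE; apply: in_le_out.
Qed.

Lemma count_formula (V : finType) (arc : rel V) : loopless arc -> friendship arc ->
  forall u, #|V|.-1 = \sum_(w in outN arc u) (#|inN arc w| - 1).
Proof.
move=> Hl Hf u.
rewrite -(cardsC1 u) -sum1_card.
rewrite (eq_bigr (fun x => \sum_(w in outN arc u) (w \in outN arc x : nat))); last first.
  by move=> x; rewrite !inE => xu; rewrite sum_in_card (proj2 Hf) // eq_sym.
rewrite (exchange_big _ _ _ (fun i => i \in [set~ u]) (fun j => j \in outN arc u) (fun i j => (j \in outN arc i : nat))) /=; apply: eq_bigr => w uw.
rewrite (eq_bigr (fun x => (x \in inN arc w : nat))); last by move=> x _; rewrite !inE.
rewrite sum_in_card (cardsD1 u (inN arc w)).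
have -> : u \in inN arc w by move: uw; rewrite !inE.
rewrite add1n subn1 /= setIC.
by rewrite setDE.
Qed.

Theorem theorem1p1 (V : finType) (arc : rel V) :
  loopless arc -> friendship arc ->
  (fancy_wheel arc \/ regular arc) /\
  (forall k, 0 < k -> k_regular arc k -> 2 <= k /\ #|V| = k ^ 2 - k + 1).
Proof.
move=> Hl Hf.
have dE := out_eq_in Hl Hf.
have E := nonarc_eq Hl Hf.
have [a0 [b0 [_ _ ab0]]] := card_gt1P (proj1 Hf).
split; last first.
  move=> k k0 Hk.
  have := count_formula Hl Hf a0.
  rewrite (eq_bigr (fun _ => k - 1)); last by move=> w _; rewrite (proj2 (Hk w)).
  rewrite sum_nat_const (proj1 (Hk a0)) => H.
  have := proj1 Hf; rewrite expnS expn1; split; nia.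
set d := fun x => #|outN arc x|.
case: (boolP [forall x, forall y, d x == d y]) => Hc.
  right; exists (d a0); split.
    have [c Hc'] := common_ex Hf ab0.
    apply/card_gt0P; exists c.
    by have /setIP[] : c \in outN arc a0 :&: outN arc b0 by rewrite Hc' in_set1.
  move=> v; have /eqP Hv := forallP (forallP Hc v) a0.
  by rewrite dE; split.
left.
have [v Hv] : exists v, forall x, x != v -> d x != d v.
  move/forallPn: Hc => [a /forallPn [b Hab]].
  case: (boolP [forall x, (x != a) ==> (d x != d a)]) => HA.
    by exists a => x xa; have := forallP HA x; rewrite xa.
  case: (boolP [forall y, (y != b) ==> (d y == d a)]) => HB.
    exists b => x xb; have /eqP -> := implyP (forallP HB x) xb.
    by [].
  move/forallPn: HA => [a' ]; rewrite negb_imply negbK => /andP[a'a /eqP da'].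
  move/forallPn: HB => [b' ]; rewrite negb_imply => /andP[b'b db'].
  exfalso.
  have arcAB : forall x y, d x = d a -> d y != d a -> arc x y.
    move=> x y dx dy; apply/negPn/negP => nxy.
    by move: dy; rewrite -dx -/(d x) /d (E _ _ nxy) eqxx.
  have Hb : b \in outN arc a :&: outN arc a' by rewrite !inE !arcAB // eq_sym.
  have Hb' : b' \in outN arc a :&: outN arc a' by rewrite !inE !arcAB.
  have := card1_eq (proj2 Hf _ _ _) Hb Hb'.
  rewrite eq_sym a'a => /(_ isT) /eqP; by rewrite eq_sym (negbTE b'b).
have Hout : forall x, x != v -> arc v x.
  move=> x xv; apply/negPn/negP => nvx.
  by move: (Hv x xv); rewrite /d (E _ _ nvx) eqxx.
have Hin : forall x, x != v -> arc x v.
  move=> x xv; apply/negPn/negP => nxv.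
  by move: (Hv x xv); rewrite /d (E _ _ nxv) eqxx.
have Ov : outN arc v = [set~ v].
  apply/setP => x; rewrite !inE; case: (eqVneq x v) => [->|xv].
    by rewrite (negbTE (Hl v)).
  by rewrite Hout.
have Iv : inN arc v = [set~ v].
  apply/setP => x; rewrite !inE; case: (eqVneq x v) => [->|xv].
    by rewrite (negbTE (Hl v)).
  by rewrite Hin.
exists v; split => //.
  move=> w Ow _; apply/eqP; apply/negPn/negP => wv.
  by move: (Hv w wv); rewrite /d Ow Ov !cardsC1 eqxx.
pose g x := odflt x [pick y in outN arc x :&: [set~ v]].
have Hg : forall x, x \in [set~ v] -> outN arc x :&: [set~ v] = [set g x].
  move=> x; rewrite !inE => xv.
  have [c Hc2] := common_ex Hf xv.
  by rewrite /g -Ov Hc2 pick_set1.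
have gS : forall x, x \in [set~ v] -> g x \in [set~ v] /\ arc x (g x).
  move=> x Hx; have : g x \in outN arc x :&: [set~ v] by rewrite Hg // in_set1.
  by rewrite inE [g x \in outN _ _]inE => /andP[-> ->].
exists g; split.
- by move=> x Hx; case: (gS x Hx).
- move=> x y Hx Hy Exy; apply/eqP; apply/negPn/negP => xy.
  have [gx agx] := gS x Hx; have [gy agy] := gS y Hy.
  have H1 : v \in outN arc x :&: outN arc y.
    by move: Hx Hy; rewrite !inE => xv yv; rewrite !Hin.
  have H2 : g x \in outN arc x :&: outN arc y by rewrite !inE agx Exy agy.
  have := card1_eq (proj2 Hf _ _ xy) H1 H2.
  by move: gx; rewrite !inE => ne eq; move: ne; rewrite -eq eqxx.
- move=> x Hx; apply/eqP => gx.
  by have [_] := gS x Hx; rewrite gx (negbTE (Hl x)).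
- move=> x y Hx Hy; apply/idP/eqP => [axy | ->]; last by case: (gS x Hx).
  have : y \in outN arc x :&: [set~ v] by rewrite inE [y \in outN _ _]inE axy.
  by rewrite Hg // in_set1 => /eqP.
Qed.
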